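(* Let $n$ be a positive odd integer. Then, modulo $\Phi_n(q)$, \[ \sum_{k=0}^{n-1}\frac{(q;q^4)_k^2}{(q^4;q^4)_k^2}(-q)^{3k} \equiv\begin{cases} \dfrac{(q^5,q^7;q^8)_{(n-1)/8}}{(q^4;q^4)_{(n-1)/4}} &\text{if } n\equiv 1\pmod 8,\\[6pt] \dfrac{(q^5,q^7;q^8)_{(3n-1)/8}}{(q^4;q^4)_{(3n-1)/4}} &\text{if } n\equiv 3\pmod 8,\\[6pt] 0 &\text{if } n\equiv 5,7\pmod 8. \end{cases} \]
   Context: For an indeterminate $a$ and a nonnegative integer $k$, $(a;q)_k=\prod_{j=0}^{k-1}(1-aq^j)$, with $(a;q)_0=1$, and $(a_1,\dots,a_m;q)_k=(a_1;q)_k\cdots(a_m;q)_k$. $\Phi_n(q)=\prod_{1\le j\le n,\ \gcd(j,n)=1}(q-e^{2\pi i j/n})$ is the $n$-th cyclotomic polynomial. A congruence between rational functions in $q$ modulo a polynomial $P(q)$ means that the difference, written as a ratio of polynomials with denominator coprime to $P(q)$, has numerator divisible by $P(q)$. *)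

(* Defs.v *)
From HB Require Import structures.
From mathcomp Require Import all_boot all_order all_algebra.
From mathcomp Require Import fraction cyclotomic.
Set Implicit Arguments. Unset Strict Implicit. Unset Printing Implicit Defensive.
Import Order.TTheory GRing.Theory Num.Theory.
Local Open Scope ring_scope.

Notation ratfun := {fraction {poly rat}}.
Notation tofracP := (@FracField.tofrac {poly rat}).
Notation "x %:F" := (tofracP x).

Definition qF : ratfun := ('X)%:F.

Definition qpoch (R : comPzRingType) (a p : R) (k : nat) : R :=
  \prod_(j < k) (1 - a * p ^+ j).

Definition PhiQ (n : nat) : {poly rat} := map_poly (intr : int -> rat) 'Phi_n.

Definition cong_mod (P : {poly rat}) (x y : ratfun) : Prop :=
  exists (N D : {poly rat}), [/\ coprimep D P, P %| N & x - y = N%:F / D%:F].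

(* Main.v *)
Require Import Defs.
From HB Require Import structures.
From mathcomp Require Import all_boot all_order all_algebra all_field.
From mathcomp Require Import fraction cyclotomic.
From mathcomp Require Import zify ring.
Import Order.TTheory GRing.Theory Num.Theory.
Local Open Scope ring_scope.

Section GenPoly.
Variable F : fieldType.

Definition Pf (f : nat -> F) M : {poly F} := \prod_(j < M) (1 - f j *: 'X).
Definition Pr (f : nat -> F) M : {poly F} := \prod_(j < M) ('X - (f j)%:P).

Lemma coef_mul1X (p : {poly F}) a k :
  (p * (1 - a *: 'X))`_k = p`_k - (if k is k'.+1 then a * p`_k' else 0).
Proof.
rewrite mulrBr mulr1 coefB -scalerAr coefZ coefMX.
by case: k => [|k] //=; rewrite mulr0.
Qed.

Lemma coef_mulXC (p : {poly F}) a k :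
  (p * ('X - a%:P))`_k = (if k is k'.+1 then p`_k' else 0) - a * p`_k.
Proof.
rewrite mulrBr coefB coefMX coefMC mulrC.
by case: k.
Qed.

Lemma Pf_rec f M : Pf f M.+1 = Pf f M * (1 - f M *: 'X).
Proof. by rewrite /Pf big_ord_recr. Qed.

Lemma Pr_rec f M : Pr f M.+1 = Pr f M * ('X - (f M)%:P).
Proof. by rewrite /Pr big_ord_recr. Qed.

Lemma Pf_coef0 f M : (Pf f M)`_0 = 1.
Proof.
elim: M => [|M IH]; first by rewrite /Pf big_ord0 coefC.
by rewrite Pf_rec coef_mul1X IH subr0.
Qed.

Lemma Pf_coef_big f M k : (M < k)%N -> (Pf f M)`_k = 0.
Proof.
elim: M k => [|M IH] k hk.
  by rewrite /Pf big_ord0 coefC; case: k hk.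
rewrite Pf_rec coef_mul1X IH ?(ltnW hk) //; case: k hk => // k hk.
by rewrite IH // mulr0 subr0.
Qed.

Lemma Pr_coef_big f M k : (M < k)%N -> (Pr f M)`_k = 0.
Proof.
elim: M k => [|M IH] k hk.
  by rewrite /Pr big_ord0 coefC; case: k hk.
rewrite Pr_rec coef_mulXC IH ?(ltnW hk) // mulr0 subr0; case: k hk => // k hk; rewrite ?IH //.
Qed.

Lemma Pf_ext f g M : (forall j, f j = g j) -> Pf f M = Pf g M.
Proof. by move=> H; apply: eq_bigr => j _; rewrite H. Qed.

Lemma Pf_scale c f M k : (Pf (fun j => c * f j) M)`_k = c ^+ k * (Pf f M)`_k.
Proof.
elim: M k => [|M IH] k.
  by rewrite /Pf !big_ord0 !coefC; case: k => [|k]; rewrite ?expr0 ?mulr1 ?mulr0.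
rewrite !Pf_rec !coef_mul1X IH; case: k => [|k]; first by rewrite !subr0.
rewrite IH exprS; ring.
Qed.

Lemma Pr_recip f M i : (i <= M)%N -> (Pr f M)`_i = (Pf f M)`_(M - i).
Proof.
elim: M i => [|M IH] i hi.
  by move: hi; rewrite leqn0 => /eqP ->; rewrite /Pr /Pf !big_ord0.
rewrite Pr_rec Pf_rec coef_mulXC coef_mul1X.
case: i hi => [|i] hi.
  by rewrite subn0 (@Pf_coef_big f M M.+1 (ltnSn M)) IH // subn0 sub0r.
case: (ltnP i M) => hiM.
  rewrite IH // IH // subSS.
  have -> : (M - i = (M - i.+1).+1)%N by lia.
  done.
have -> : i = M by lia.
by rewrite subnn (@Pr_coef_big f M M.+1 (ltnSn M)) mulr0 subr0 IH // subnn subr0.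
Qed.


Lemma Pf_funeq v y M : v * y ^+ M = 1 ->
  Pf (fun j => y * (v * y ^+ j)) M * (1 - v *: 'X) =
  Pf (fun j => v * y ^+ j) M * (1 - 1 *: 'X).
Proof.
move=> h; rewrite -h -Pf_rec /Pf big_ord_recl mulrC expr0 mulr1.
congr (_ * _); apply: eq_bigr => j _; rewrite /= exprS; congr (1 - _ *: _); ring.
Qed.

Lemma Pf_closed v y M k : v * y ^+ M = 1 ->
  (Pf (fun j => v * y ^+ j) M)`_k * qpoch y y k = qpoch v y k.
Proof.
move=> h; have fe := @Pf_funeq v y M h.
set E := fun i => (Pf (fun j => v * y ^+ j) M)`_i.
have rec : forall i, E i.+1 * (1 - y ^+ i.+1) = E i * (1 - v * y ^+ i).
  move=> i; have := congr1 (fun p : {poly F} => p`_i.+1) fe.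
  rewrite /= !coef_mul1X !(Pf_scale y (fun j => v * y ^+ j)) mul1r => H.
  rewrite /E; apply/eqP; rewrite -subr_eq0; apply/eqP.
  set a := (Pf _ M)`_i.+1 in H *; set b := (Pf _ M)`_i in H *.
  transitivity ((a - b) - (y ^+ i.+1 * a - v * (y ^+ i * b))); first ring.
  by rewrite -H subrr.
elim: k => [|k IH]; first by rewrite /qpoch !big_ord0 mulr1 /E Pf_coef0.
rewrite /qpoch !big_ord_recr /= -/(qpoch y y k) -/(qpoch v y k) -IH.
rewrite -/(E k.+1) -/(E k).
transitivity (qpoch y y k * (E k.+1 * (1 - y ^+ k.+1))); first by rewrite exprS; ring.
by rewrite rec; ring.
Qed.


Lemma Pf_compX2 f M : (Pf f M) \Po 'X^2 = \prod_(j < M) (1 - f j *: 'X^2).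
Proof.
elim: M => [|M IH]; first by rewrite /Pf !big_ord0 -polyC1 comp_polyC.
by rewrite Pf_rec big_ord_recr /= comp_polyM IH comp_polyB comp_polyZ comp_polyX -polyC1 comp_polyC.
Qed.

Lemma prod_split2 (f : nat -> F) l :
  \prod_(j < 2 * l) f j = \prod_(i < l) (f (2 * i)%N * f (2 * i).+1).
Proof.
elim: l => [|l IH]; first by rewrite muln0 !big_ord0.
have -> : (2 * l.+1 = (2 * l).+2)%N by lia.
by rewrite !big_ord_recr /= IH mulrA.
Qed.

Lemma refl_qpoch (a b y : F) l :
  (forall j, (j < l)%N -> (a * y ^+ j) * (b * y ^+ (l - j.+1)) = 1) ->
  qpoch a y l = \prod_(j < l) (- (a * y ^+ j)) * qpoch b y l.
Proof.
move=> H; rewrite /qpoch [X in _ = _ * X](reindex_inj rev_ord_inj) /= -big_split /=.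
apply: eq_bigr => j _; rewrite mulrBr mulr1 mulNr H ?ltn_ord //.
by rewrite opprK addrC.
Qed.

End GenPoly.
Arguments Pf {F}. Arguments Pr {F}.

Lemma coprime2k k n : odd n -> coprime (2 ^ k) n.
Proof. by case: k => [|k] h; [rewrite expn0 coprime1n | rewrite coprime_pexpl // coprime2n]. Qed.

Section AtRoot.
Variable F : fieldType.
Variables (z : F) (n m : nat).
Hypothesis hprim : n.-primitive_root z.
Hypothesis hodd : odd n.
Hypothesis hm : z ^+ (4 * m + 1) = 1.
Hypothesis hmn : (m < n)%N.

Lemma qpoch_pow_neq0 c k : coprime c n -> (k < n)%N ->
  qpoch (z ^+ c) (z ^+ c) k != 0.
Proof.
move=> hc hk; apply/prodf_neq0 => j _.
rewrite -exprM -exprD -mulnS subr_eq0 eq_sym -(prim_order_dvd hprim).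
rewrite Gauss_dvdr; last by rewrite coprime_sym.
apply/negP => /dvdn_leq => /(_ isT); have := ltn_ord j; lia.
Qed.

Lemma qpoch_z_big k : (m < k)%N -> qpoch z (z ^+ 4) k = 0.
Proof.
move=> hk; apply/eqP/prodf_eq0; exists (Ordinal hk) => //=.
have h := hm; rewrite -exprM -exprS; rewrite addn1 in h; by rewrite h subrr.
Qed.

Definition E k := (Pf (fun j => z * (z ^+ 4) ^+ j) m)`_k.


Lemma E_closed k : (k < n)%N -> E k = qpoch z (z ^+ 4) k / qpoch (z ^+ 4) (z ^+ 4) k.
Proof.
move=> hk; have h4 : coprime 4 n := @coprime2k 2 n hodd.
rewrite -(@Pf_closed F z (z ^+ 4) m k); last by rewrite -exprM -exprS -hm addn1.
by rewrite mulfK // qpoch_pow_neq0.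
Qed.


Definition LHS := \sum_(k < n) (qpoch z (z ^+ 4) k) ^+ 2 / (qpoch (z ^+ 4) (z ^+ 4) k) ^+ 2 * (- z) ^+ (3 * k).

Lemma LHS_E : LHS = \sum_(k < m.+1) E k * ((- z ^+ 3) ^+ k * E k).
Proof.
rewrite /LHS (big_ord_widen n (fun k => E k * ((- z ^+ 3) ^+ k * E k)) hmn) [RHS]big_mkcond /=.
apply: eq_bigr => k _; case: ifP => hk.
  rewrite E_closed ?ltn_ord // exprM.
  have -> : (- z) ^+ 3 = - z ^+ 3 by ring.
  rewrite -expr_div_n; ring.
rewrite qpoch_z_big; last by rewrite ltnNge -ltnS hk.
by rewrite expr0n /= !mul0r.
Qed.

Lemma SumE_coef : \sum_(k < m.+1) E k * ((- z ^+ 3) ^+ k * E k) =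
  (Pf (fun j => z * (z ^+ 4) ^+ j) m * Pr (fun j => - (z ^+ 4) ^+ j.+1) m)`_m.
Proof.
rewrite coefM; apply: eq_bigr => j _.
have hj : (j <= m)%N by rewrite -ltnS ltn_ord.
rewrite Pr_recip ?leq_subr // subKn //.
rewrite (@Pf_ext F (fun j => - (z ^+ 4) ^+ j.+1) (fun j => (- z ^+ 3) * (z * (z ^+ 4) ^+ j)) m); last by move=> i; rewrite exprS; ring.
by rewrite (@Pf_scale F (- z ^+ 3)).
Qed.

Lemma key_factor (a b : F) : a * b = 1 -> 'X - (- a)%:P = a%:P * (1 - (- b) *: 'X).
Proof.
move=> hab; rewrite scaleNr opprK mulrDr mulr1 mul_polyC scalerA hab scale1r polyCN opprK addrC.
done.
Qed.

Lemma Pr_eq : Pr (fun j => - (z ^+ 4) ^+ j.+1) m =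
  (\prod_(j < m) (z ^+ 4) ^+ j.+1)%:P * Pf (fun j => - (z * (z ^+ 4) ^+ j)) m.
Proof.
rewrite /Pf [X in _ = _ * X](reindex_inj rev_ord_inj) /= rmorph_prod -big_split /=.
apply: eq_bigr => j _; apply: key_factor.
have hj := ltn_ord j.
rewrite -!exprM mulrCA -exprD -exprS -hm; congr (z ^+ _); lia.
Qed.

Lemma GG : Pf (fun j => z * (z ^+ 4) ^+ j) m * Pf (fun j => - (z * (z ^+ 4) ^+ j)) m =
  (Pf (fun j => z ^+ 2 * (z ^+ 8) ^+ j) m) \Po 'X^2.
Proof.
rewrite Pf_compX2 /Pf -big_split; apply: eq_bigr => j _ /=.
have -> : z ^+ 2 * (z ^+ 8) ^+ j = (z * (z ^+ 4) ^+ j) ^+ 2.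
  by rewrite -!exprM -exprD -exprS -exprM; congr (z ^+ _); lia.
rewrite -!mul_polyC polyCN rmorphXn; ring.
Qed.

Lemma LHS_val : LHS = (\prod_(j < m) (z ^+ 4) ^+ j.+1) *
  (if (2 %| m)%N then (Pf (fun j => z ^+ 2 * (z ^+ 8) ^+ j) m)`_(m %/ 2) else 0).
Proof.
by rewrite LHS_E SumE_coef Pr_eq mulrCA coefCM GG coef_comp_poly_Xn.
Qed.


Lemma LHS_odd : odd m -> LHS = 0.
Proof. by move=> h; rewrite LHS_val dvdn2 h /= mulr0. Qed.

Lemma prod_exp_sum (l : nat) : \prod_(i < l) z ^+ (32 * i + 18) = z ^+ ((8 * l + 1) * (2 * l)).
Proof.
elim: l => [|l IH]; first by rewrite big_ord0 muln0 expr0.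
rewrite big_ord_recr /= IH -exprD; congr (z ^+ _); nia.
Qed.

Lemma combined l : z ^+ (8 * l + 1) = 1 ->
  (\prod_(j < 2 * l) (z ^+ 4) ^+ j.+1) * qpoch (z ^+ 2) (z ^+ 8) l * qpoch (z ^+ 4) (z ^+ 8) l
  = qpoch (z ^+ 5) (z ^+ 8) l * qpoch (z ^+ 7) (z ^+ 8) l.
Proof.
move=> h.
rewrite (@refl_qpoch F (z ^+ 2) (z ^+ 7) (z ^+ 8) l); last first.
  move=> j hj; rewrite -!exprM -!exprD -h; congr (z ^+ _); lia.
rewrite (@refl_qpoch F (z ^+ 4) (z ^+ 5) (z ^+ 8) l); last first.
  move=> j hj; rewrite -!exprM -!exprD -h; congr (z ^+ _); lia.
set c := \prod_(j < 2 * l) _.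
set P2 := \prod_(j < l) - (z ^+ 2 * _).
set P4 := \prod_(j < l) - (z ^+ 4 * _).
suff H : c * P2 * P4 = 1.
  transitivity ((c * P2 * P4) * (qpoch (z ^+ 5) (z ^+ 8) l * qpoch (z ^+ 7) (z ^+ 8) l)); first ring.
  by rewrite H mul1r.
rewrite /c /P2 /P4 (@prod_split2 F (fun j => (z ^+ 4) ^+ j.+1)) -!big_split /=.
transitivity (\prod_(i < l) z ^+ (32 * i + 18)); last by rewrite prod_exp_sum exprM h expr1n.
apply: eq_bigr => i _.
rewrite !mulrN !mulNr opprK -!exprM -!exprD; congr (z ^+ _); lia.
Qed.

Lemma qpoch_split l : qpoch (z ^+ 4) (z ^+ 4) (2 * l) = qpoch (z ^+ 4) (z ^+ 8) l * qpoch (z ^+ 8) (z ^+ 8) l.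
Proof.
rewrite /qpoch (@prod_split2 F (fun j => 1 - z ^+ 4 * (z ^+ 4) ^+ j)) -big_split; apply: eq_bigr => i _ /=.
by rewrite -!exprM -!exprD; congr ((1 - z ^+ _) * (1 - z ^+ _)); lia.
Qed.

Lemma LHS_even l : m = (2 * l)%N ->
  LHS = qpoch (z ^+ 5) (z ^+ 8) l * qpoch (z ^+ 7) (z ^+ 8) l / qpoch (z ^+ 4) (z ^+ 4) m.
Proof.
move=> hml.
have h2 : (2 %| m)%N by rewrite hml; apply: dvdn_mulr.
have hl : (m %/ 2 = l)%N by rewrite hml mulKn.
have hln : (l < n)%N by lia.
have h4 : coprime 4 n := @coprime2k 2 n hodd.
have h8 : coprime 8 n := @coprime2k 3 n hodd.
have hQ := @Pf_closed F (z ^+ 2) (z ^+ 8) m l.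
have hQ8 : qpoch (z ^+ 8) (z ^+ 8) l != 0 by apply: qpoch_pow_neq0.
have hA := @qpoch_pow_neq0 4 m h4 hmn.
have h8l : z ^+ (8 * l + 1) = 1 by rewrite -hm; congr (z ^+ _); lia.
have hc := combined l h8l.
rewrite -hml in hc.
rewrite LHS_val h2 hl -hc.
rewrite -hQ; last by rewrite -exprM -exprD -(expr1n F 2) -hm -exprM; congr (z ^+ _); lia.
move: hA; rewrite hml qpoch_split mulf_eq0 negb_or => /andP [hA4 _].
field.
by rewrite hA4 hQ8.
Qed.

End AtRoot.
Lemma fadd (K : fieldType) (a b c d : K) : b != 0 -> d != 0 -> a / b + c / d = (a * d + c * b) / (b * d).
Proof. by move=> hb hd; field; rewrite hb hd. Qed.
Lemma fsub (K : fieldType) (a b c d : K) : b != 0 -> d != 0 -> a / b - c / d = (a * d - c * b) / (b * d).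
Proof. by move=> hb hd; field; rewrite hb hd. Qed.
Lemma fmul (K : fieldType) (a b c d : K) : b != 0 -> d != 0 -> a / b * (c / d) = (a * c) / (b * d).
Proof. by move=> hb hd; field; rewrite hb hd. Qed.
Lemma fdiv (K : fieldType) (a b c d : K) : b != 0 -> d != 0 -> c != 0 -> (a / b) / (c / d) = (a * d) / (b * c).
Proof. by move=> hb hd hc; field; rewrite hb hd hc. Qed.

Section Bridge.
Variable z : algC.
Variable P : {poly rat}.
Hypothesis hPz : forall q : {poly rat}, root (map_poly ratr q) z = (P %| q).
Hypothesis hP0 : P != 0.

Definition ev (p : {poly rat}) : algC := (map_poly ratr p).[z].

Lemma ev0 : ev 0 = 0. Proof. by rewrite /ev rmorph0 horner0. Qed.
Lemma ev1 : ev 1 = 1. Proof. by rewrite /ev rmorph1 hornerC. Qed.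
Lemma evD p q : ev (p + q) = ev p + ev q. Proof. by rewrite /ev rmorphD hornerD. Qed.
Lemma evB p q : ev (p - q) = ev p - ev q. Proof. by rewrite /ev rmorphB hornerD hornerN. Qed.
Lemma evM p q : ev (p * q) = ev p * ev q. Proof. by rewrite /ev rmorphM hornerM. Qed.
Lemma evX : ev 'X = z. Proof. by rewrite /ev map_polyX hornerX. Qed.

Lemma ev_root q : (ev q == 0) = (P %| q).
Proof. by rewrite -hPz rootE. Qed.

Lemma ev_neq0_nz q : ev q != 0 -> q != 0.
Proof. by apply: contra => /eqP ->; rewrite ev0. Qed.

Lemma ev_coprime D : ev D != 0 -> coprimep D P.
Proof.
move=> hD; apply/coprimepP => d hdD hdP.
have hd : ev d != 0.
  apply/negP; rewrite ev_root => hPd.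
  by move: hD; rewrite ev_root (dvdp_trans hPd hdD).
have hd0 := @ev_neq0_nz d hd.
have [h hPh] := dvdpP _ _ hdP.
have hh : ev h == 0.
  have : ev P == 0 by rewrite ev_root dvdpp.
  by rewrite {1}hPh evM mulf_eq0 (negbTE hd) orbF.
have hh0 : h != 0 by apply: contraNneq hP0 => h0; rewrite hPh h0 mul0r.
move: hh; rewrite ev_root => /(dvdp_leq hh0).
rewrite {1}hPh size_mul // -size_poly_eq1.
have : size d != 0%N by rewrite size_poly_eq0.
case: (size d) => [|[|k]] //= _.
move: (size h) => a; lia.
Qed.

Definition Rel (x : {fraction {poly rat}}) (v : algC) :=
  exists N D : {poly rat}, [/\ ev D != 0, x = N%:F / D%:F & v = ev N / ev D].

Lemma tofrac_nz D : ev D != 0 -> D%:F != 0.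
Proof. by move=> h; rewrite tofrac_eq0 ev_neq0_nz. Qed.

Lemma Rel_poly p : Rel (p%:F) (ev p).
Proof. by exists p, 1; rewrite ev1 oner_eq0 rmorph1 !divr1. Qed.

Lemma Rel_add x v y w : Rel x v -> Rel y w -> Rel (x + y) (v + w).
Proof.
move=> [N1 [D1 [h1 -> ->]]] [N2 [D2 [h2 -> ->]]].
exists (N1 * D2 + N2 * D1), (D1 * D2); split.
- by rewrite evM mulf_neq0.
- by rewrite rmorphD !rmorphM fadd // tofrac_nz.
- by rewrite evD !evM fadd.
Qed.

Lemma Rel_sub x v y w : Rel x v -> Rel y w -> Rel (x - y) (v - w).
Proof.
move=> [N1 [D1 [h1 -> ->]]] [N2 [D2 [h2 -> ->]]].
exists (N1 * D2 - N2 * D1), (D1 * D2); split.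
- by rewrite evM mulf_neq0.
- by rewrite rmorphB !rmorphM fsub // tofrac_nz.
- by rewrite evB !evM fsub.
Qed.

Lemma Rel_mul x v y w : Rel x v -> Rel y w -> Rel (x * y) (v * w).
Proof.
move=> [N1 [D1 [h1 -> ->]]] [N2 [D2 [h2 -> ->]]].
exists (N1 * N2), (D1 * D2); split.
- by rewrite evM mulf_neq0.
- by rewrite !rmorphM fmul // tofrac_nz.
- by rewrite !evM fmul.
Qed.

Lemma Rel_div x v y w : Rel x v -> Rel y w -> w != 0 -> Rel (x / y) (v / w).
Proof.
move=> [N1 [D1 [h1 -> ->]]] [N2 [D2 [h2 -> ->]]] hw.
have hN2 : ev N2 != 0 by move: hw; rewrite mulf_eq0 negb_or => /andP [].
exists (N1 * D2), (D1 * N2); split.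
- by rewrite evM mulf_neq0.
- by rewrite !rmorphM fdiv // tofrac_nz.
- by rewrite !evM fdiv.
Qed.

Lemma Rel_exp x v k : Rel x v -> Rel (x ^+ k) (v ^+ k).
Proof.
move=> h; elim: k => [|k IH]; first by rewrite !expr0 -tofrac1 -ev1; apply: Rel_poly.
by rewrite !exprS; apply: Rel_mul.
Qed.

Lemma Rel_one : Rel 1 1.
Proof. by rewrite -tofrac1 -ev1; apply: Rel_poly. Qed.

Lemma Rel_zero : Rel 0 0.
Proof. by rewrite -tofrac0 -ev0; apply: Rel_poly. Qed.

Lemma Rel_qF : Rel qF z.
Proof. by rewrite /qF -evX; apply: Rel_poly. Qed.

Lemma Rel_opp x v : Rel x v -> Rel (- x) (- v).
Proof. by move=> h; rewrite -sub0r -[- v]sub0r; apply: Rel_sub => //; apply: Rel_zero. Qed.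

Lemma Rel_qpoch a va p vp k : Rel a va -> Rel p vp -> Rel (qpoch a p k) (qpoch va vp k).
Proof.
move=> ha hp; rewrite /qpoch; apply: (big_ind2 Rel Rel_one Rel_mul) => j _.
by apply: Rel_sub; [apply: Rel_one | apply: Rel_mul => //; apply: Rel_exp].
Qed.

Lemma Rel_cong x y : Rel (x - y) 0 -> cong_mod P x y.
Proof.
move=> [N [D [hD hxy hv]]].
exists N, D; split => //; first exact: ev_coprime.
rewrite -ev_root; move/esym/eqP: hv; by rewrite mulf_eq0 invr_eq0 (negbTE hD) orbF.
Qed.

End Bridge.


Lemma RelX (n : nat) (z : algC) m : n.-primitive_root z -> odd n -> (m < n)%N ->
  Rel z (\sum_(k < n)
       (qpoch qF (qF ^+ 4) k) ^+ 2 / (qpoch (qF ^+ 4) (qF ^+ 4) k) ^+ 2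
       * (- qF) ^+ (3 * k)%N) (LHS _ z n).
Proof.
move=> hz ho hmn; rewrite /LHS.
apply: (big_ind2 (Rel z) (@Rel_zero z) (@Rel_add z)) => k _.
have h4 : coprime 4 n := @coprime2k 2 n ho.
apply: Rel_mul; last by apply: Rel_exp; apply: Rel_opp; apply: Rel_qF.
apply: Rel_div.
- by apply: Rel_exp; apply: Rel_qpoch; [apply: Rel_qF | apply: Rel_exp; apply: Rel_qF].
- by apply: Rel_exp; apply: Rel_qpoch; apply: Rel_exp; apply: Rel_qF.
- by apply: expf_neq0; apply: (@qpoch_pow_neq0 _ z n m).
Qed.

Lemma RelY (n : nat) (z : algC) m l : n.-primitive_root z -> odd n -> (m < n)%N ->
  Rel z (qpoch (qF ^+ 5) (qF ^+ 8) l * qpoch (qF ^+ 7) (qF ^+ 8) l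
         / qpoch (qF ^+ 4) (qF ^+ 4) m)
   (qpoch (z ^+ 5) (z ^+ 8) l * qpoch (z ^+ 7) (z ^+ 8) l / qpoch (z ^+ 4) (z ^+ 4) m).
Proof.
move=> hz ho hmn.
have h4 : coprime 4 n := @coprime2k 2 n ho.
apply: Rel_div.
- by apply: Rel_mul; apply: Rel_qpoch; apply: Rel_exp; apply: Rel_qF.
- by apply: Rel_qpoch; apply: Rel_exp; apply: Rel_qF.
- exact: (@qpoch_pow_neq0 _ z n m).
Qed.

Theorem theorem3 (n : nat) : (0 < n)%N -> odd n ->
  cong_mod (PhiQ n)
    (\sum_(k < n)
       (qpoch qF (qF ^+ 4) k) ^+ 2 / (qpoch (qF ^+ 4) (qF ^+ 4) k) ^+ 2
       * (- qF) ^+ (3 * k)%N)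
    (if (n %% 8 == 1)%N then
       qpoch (qF ^+ 5) (qF ^+ 8) ((n - 1) %/ 8)%N * qpoch (qF ^+ 7) (qF ^+ 8) ((n - 1) %/ 8)%N
         / qpoch (qF ^+ 4) (qF ^+ 4) ((n - 1) %/ 4)%N
     else if (n %% 8 == 3)%N then
       qpoch (qF ^+ 5) (qF ^+ 8) ((3 * n - 1) %/ 8)%N * qpoch (qF ^+ 7) (qF ^+ 8) ((3 * n - 1) %/ 8)%N
         / qpoch (qF ^+ 4) (qF ^+ 4) ((3 * n - 1) %/ 4)%N
     else 0).
Proof.
move=> hn ho.
have [z hz] := C_prim_root_exists hn.
have hPz : forall q : {poly rat}, root (map_poly ratr q) z = (PhiQ n %| q).
  have [p [hp _] hroot] := minCpolyP z.
  suff -> : PhiQ n = p by [].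
  apply: (@map_poly_inj rat algC ratr).
  rewrite -hp (minCpoly_cyclotomic hz) -(Cintr_Cyclotomic hz) /PhiQ -map_poly_comp.
  by apply: eq_map_poly => x /=; rewrite rmorph_int.
have hP0 : PhiQ n != 0.
  by apply: monic_neq0; rewrite /PhiQ; apply: monic_map; apply: Cyclotomic_monic.
apply: (@Rel_cong z (PhiQ n) hPz hP0).
have hzn : z ^+ n = 1 := prim_expr_order hz.
have h8 : (n %% 8 = 1 \/ n %% 8 = 3 \/ n %% 8 = 5 \/ n %% 8 = 7)%N.
  have := ho; rewrite {1}(divn_eq n 8) oddD oddM andbF /=.
  have : (n %% 8 < 8)%N by rewrite ltn_mod.
  case: (n %% 8)%N => [|[|[|[|[|[|[|[|k]]]]]]]] //= *; lia.
case: ifP => [/eqP h1 | /eqP h1].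
  pose m := ((n - 1) %/ 4)%N.
  have hmn : (m < n)%N by rewrite /m; lia.
  have hm : z ^+ (4 * m + 1) = 1 by rewrite -hzn; congr (z ^+ _); rewrite /m; lia.
  rewrite -[X in Rel _ _ X](subrr (LHS _ z n)); apply: Rel_sub; first exact: (@RelX n z m).
  rewrite (@LHS_even _ z n m hz ho hm hmn ((n - 1) %/ 8)%N); last by rewrite /m; lia.
  exact: (@RelY n z _ _ hz ho hmn).
case: ifP => [/eqP h3 | /eqP h3].
  pose m := ((3 * n - 1) %/ 4)%N.
  have hmn : (m < n)%N by rewrite /m; lia.
  have hm : z ^+ (4 * m + 1) = 1.
    by rewrite -(expr1n _ 3) -hzn -exprM; congr (z ^+ _); rewrite /m; lia.
  rewrite -[X in Rel _ _ X](subrr (LHS _ z n)); apply: Rel_sub; first exact: (@RelX n z m).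
  rewrite (@LHS_even _ z n m hz ho hm hmn ((3 * n - 1) %/ 8)%N); last by rewrite /m; lia.
  exact: (@RelY n z _ _ hz ho hmn).
have [h5 | h7] : (n %% 8 = 5 \/ n %% 8 = 7)%N by lia.
  pose m := ((n - 1) %/ 4)%N.
  have hmn : (m < n)%N by rewrite /m; lia.
  have hm : z ^+ (4 * m + 1) = 1 by rewrite -hzn; congr (z ^+ _); rewrite /m; lia.
  have hmo : odd m.
    have -> : m = (2 * ((n - 1) %/ 8) + 1)%N by rewrite /m; lia.
    by rewrite oddD oddM.
  rewrite -[X in Rel _ _ X](subrr (LHS _ z n)); apply: Rel_sub; first exact: (@RelX n z m).
  by rewrite (@LHS_odd _ z n m hz ho hm hmn hmo); apply: Rel_zero.
pose m := ((3 * n - 1) %/ 4)%N.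
have hmn : (m < n)%N by rewrite /m; lia.
have hm : z ^+ (4 * m + 1) = 1.
  by rewrite -(expr1n _ 3) -hzn -exprM; congr (z ^+ _); rewrite /m; lia.
have hmo : odd m.
  have -> : m = (2 * ((3 * n - 1) %/ 8) + 1)%N by rewrite /m; lia.
  by rewrite oddD oddM.
rewrite -[X in Rel _ _ X](subrr (LHS _ z n)); apply: Rel_sub; first exact: (@RelX n z m).
by rewrite (@LHS_odd _ z n m hz ho hm hmn hmo); apply: Rel_zero.
Qed.
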